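(* Let $K$, $I$, $I'$, $\lambda_0$ and $f_2^{\mathrm{tr}}$ be as in the context, and suppose $\mathbb P(I\cap I'\ne\emptyset)<1$. Then $\sup_{\mathrm{tr}\in\mathbb N}\mathrm{tr}\,f_2^{\mathrm{tr}}(\lambda)<\infty$ for all $\lambda<\lambda_0$.
   Context: Let $K$ be a probability distribution on $\mathbb N=\{1,2,\dots\}$ (with $\lim_{n\to\infty}\log K(n)/\log n=-(1+\alpha)$ for some $\alpha\in[0,\infty)$). Let $I$ and $I'$ be the sets of renewal times in $\mathbb N$ (excluding $0$) of two independent renewal processes started at $0$ with inter-arrival law $K$, and $\lambda_0:=-\log\mathbb P(I\cap I'\ne\emptyset)$. For $\mathrm{tr}\in\mathbb N$ let $K^{\mathrm{tr}}(n)=K(n)$ for $1\le n\le\mathrm{tr}-1$, $K^{\mathrm{tr}}(\mathrm{tr})=\sum_{m\ge\mathrm{tr}}K(m)$, $K^{\mathrm{tr}}(n)=0$ for $n>\mathrm{tr}$. Let $J,J'\subseteq\mathbb N_0$ be the renewal sets (containing $0$) of two independent renewal processes started at $0$ with inter-arrival law $K^{\mathrm{tr}}$, and define $f_2^{\mathrm{tr}}(\lambda):=\lim_{n\to\infty}\frac1n\log E\big[\exp\big(\lambda\sum_{k=0}^{n-1}1_{\{k\in J\cap J'\}}\big)\big]$. *)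

(* Defs.v *)
From HB Require Import structures.
From mathcomp Require Import all_boot all_order all_algebra.
From mathcomp Require Import all_classical all_reals all_analysis.
Unset Printing Implicit Defensive.
Import Order.TTheory GRing.Theory Num.Theory.
Import numFieldNormedType.Exports.
Local Open Scope ring_scope.

Section Renewal.
Variable R : realType.

(* tail of an inter-arrival law L on {1,2,...} (summing to 1):
   P(T > m) = 1 - P(1 <= T <= m) *)
Definition tailK (L : nat -> R) (m : nat) : R :=
  1 - \sum_(1 <= j < m.+1) L j.

(* Product of inter-arrival probabilities along the sorted list of renewal
   times s (previous renewal at prev), times the probability that the next
   inter-arrival overshoots the window end n. *)
Fixpoint renewal_path (L : nat -> R) (n prev : nat) (s : seq nat) : R :=
  match s with
  | [::] => tailK L (n - prev)%N
  | a :: s' => L (a - prev)%N * renewal_path L n a s'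
  end.

(* For a renewal process started at 0 with inter-arrival law L, the
   probability that its set of renewal times in the window {1,...,n}
   is exactly {i.+1 | i \in A}  (A : {set 'I_n}). *)
Definition renewal_win (L : nat -> R) (n : nat) (A : {set 'I_n}) : R :=
  renewal_path L n 0 (sort leq [seq (val i).+1 | i <- enum A]).

(* P(I \cap I' \cap {1..n} <> empty) for two independent copies. *)
Definition meet_prob_win (L : nat -> R) (n : nat) : R :=
  \sum_(A : {set 'I_n}) \sum_(B : {set 'I_n} | (A :&: B != finset.set0)%SET)
     renewal_win L n A * renewal_win L n B.

(* P(I \cap I' <> empty) = limit of the increasing window probabilities *)
Definition meet_prob (L : nat -> R) : R := limn (meet_prob_win L).

Definition Ktrunc (L : nat -> R) (tr : nat) (n : nat) : R :=
  if (n < tr)%N then L n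
  else if n == tr then 1 - \sum_(1 <= j < tr) L j   (* = sum_{m >= tr} L m *)
  else 0.

(* E[exp(lam * sum_{k=0}^{n-1} 1_{k \in J \cap J'})] where J, J' contain 0;
   for n = n'.+1 the window is {0} u {1..n'}, 0 always lies in J \cap J'. *)
Definition exp_moment (L : nat -> R) (lam : R) (n : nat) : R :=
  match n with
  | 0 => 1
  | n'.+1 =>
    \sum_(A : {set 'I_n'}) \sum_(B : {set 'I_n'})
      renewal_win L n' A * renewal_win L n' B
        * expR (lam * (1 + #|A :&: B|%:R))
  end.

Definition f2tr (L : nat -> R) (tr : nat) (lam : R) : R :=
  limn (fun n : nat => ln (exp_moment (Ktrunc L tr) lam n) / n%:R).

End Renewal.

(* Main.v *)
Require Import Defs.
From HB Require Import structures.
From mathcomp Require Import all_boot all_order all_algebra.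
From mathcomp Require Import all_classical all_reals all_analysis.
From mathcomp Require Import ring lra zify.
Import Order.TTheory GRing.Theory Num.Theory.
Import numFieldNormedType.Exports.

Local Open Scope ring_scope.

Fixpoint allbits (n : nat) : seq (seq bool) :=
  match n with
  | 0 => [:: [::]]
  | n'.+1 => [seq false :: b | b <- allbits n'] ++ [seq true :: b | b <- allbits n']
  end.

Lemma mem_allbits n b : (b \in allbits n) = (size b == n).
Proof.
elim: n b => [|n IH] b.
  by case: b.
rewrite /= mem_cat; case: b => [|x b] /=.
  by apply/orP => -[] /mapP [c].
have inj : forall y : bool, injective (@cons bool y) by move=> y u v; case.
case: x.
- rewrite orbC (mem_map (inj true)) IH eqSS.
  have -> : (true :: b \in [seq false :: b0 | b0 <- allbits n]) = false.
    by apply/mapP => -[c].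
  by rewrite orbF.
- rewrite (mem_map (inj false)) IH eqSS.
  have -> : (false :: b \in [seq true :: b0 | b0 <- allbits n]) = false.
    by apply/mapP => -[c].
  by rewrite orbF.
Qed.

Lemma uniq_allbits n : uniq (allbits n).
Proof.
have inj : forall y : bool, injective (@cons bool y) by move=> y u v; case.
elim: n => [|n IH] //=.
rewrite cat_uniq !(map_inj_uniq (inj _)) IH /= andbT.
by apply/hasPn => x /mapP [c _ ->]; apply/mapP => -[d].
Qed.

Definition bits n (A : {set 'I_n}) : seq bool := [seq i \in A | i <- enum 'I_n].

Arguments bits {n}.
Lemma size_bits n (A : {set 'I_n}) : size (bits A) = n.
Proof. by rewrite size_map size_enum_ord. Qed.

Lemma bitsK n (A : {set 'I_n}) : [set i : 'I_n | nth false (bits A) i] = A.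
Proof.
apply/setP => i; rewrite inE /bits (nth_map i) ?size_enum_ord //.
by rewrite nth_ord_enum.
Qed.

Lemma bits_inj n : injective (@bits n).
Proof. by move=> A B e; rewrite -(@bitsK _ A) -(@bitsK _ B) e. Qed.

Lemma sum_sets (R : realType) (n : nat) (F : seq bool -> R) :
  \sum_(A : {set 'I_n}) F (bits A) = \sum_(b <- allbits n) F b.
Proof.
rewrite -(big_map bits predT F); apply: perm_big.
apply: uniq_perm.
- by rewrite (map_inj_uniq (@bits_inj n)) index_enum_uniq.
- exact: uniq_allbits.
move=> b; rewrite mem_allbits; apply/idP/idP.
- by move=> /mapP [A _ ->]; rewrite size_bits.
- move/eqP <-; apply/mapP.
  exists [set i : 'I_(size b) | nth false b i]; first by rewrite mem_index_enum.
  apply: (@eq_from_nth _ false); first by rewrite size_bits.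
  move=> i hi.
  by rewrite /bits (nth_map (Ordinal hi)) ?size_enum_ord // inE nth_enum_ord.
Qed.

Lemma enumA n (A : {set 'I_n}) : enum A = [seq i <- enum 'I_n | i \in A].
Proof. by rewrite enumT /enum_mem. Qed.

Lemma pos_bits n (A : {set 'I_n}) :
  sort leq [seq (val i).+1 | i <- enum A] = mask (bits A) (iota 1 n).
Proof.
have e : [seq (val i).+1 | i <- enum A] = mask (bits A) (iota 1 n).
  rewrite enumA filter_mask map_mask /bits; congr mask.
  by rewrite (map_comp succn val) val_enum_ord (iotaDl 1 0).
rewrite e; apply: sorted_sort; first exact: leq_trans.
by apply: sorted_mask; [exact: leq_trans| exact: iota_sorted].
Qed.

Fixpoint cnt (b b' : seq bool) : nat :=
  match b, b' with
  | x :: b1, y :: b2 => (x && y) + cnt b1 b2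
  | _, _ => 0
  end.

Lemma cnt_map (T : Type) (p q : pred T) (s : seq T) :
  cnt (map p s) (map q s) = count (fun i => p i && q i) s.
Proof. by elim: s => //= x s ->. Qed.

Lemma card_bits n (A B : {set 'I_n}) : #|A :&: B| = cnt (bits A) (bits B).
Proof.
rewrite cardE enumA size_filter /bits cnt_map.
by apply: eq_count => i; rewrite inE.
Qed.

Lemma sum_sets2 (R : realType) n (G : seq bool -> seq bool -> R) :
  \sum_(A : {set 'I_n}) \sum_(B : {set 'I_n}) G (bits A) (bits B) =
  \sum_(b <- allbits n) \sum_(b' <- allbits n) G b b'.
Proof.
under eq_bigr => A _ do rewrite (@sum_sets R n (G (bits A))).
exact: (@sum_sets R n (fun b => \sum_(b' <- allbits n) G b b')).
Qed.

Section Chain.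
Variable R : realType.
Variable L : nat -> R.

Definition T g := tailK R L g.

Fixpoint W (g : nat) (b : seq bool) : R :=
  match b with
  | [::] => T g
  | x :: b' => if x then L g.+1 * W 0 b' else W g.+1 b'
  end.

Lemma path_mask b p prev : (prev <= p)%N ->
  renewal_path R L (p + size b) prev (mask b (iota p.+1 (size b))) = W (p - prev) b.
Proof.
elim: b p prev => [|x b IH] p prev hp /=; first by rewrite addn0.
rewrite -addSnnS; case: x => /=.
- by rewrite IH // subnn subSn.
- by rewrite IH ?subSn // (leq_trans hp).
Qed.

Lemma win_bits n (A : {set 'I_n}) : renewal_win R L n A = W 0 (bits A).
Proof.
rewrite /renewal_win pos_bits.
have := @path_mask (bits A) 0 0 (leqnn 0).
by rewrite add0n size_bits.
Qed.

Lemma add4 (a b c d a' b' c' d' : R) : a = a' -> b = b' -> c = c' -> d = d' ->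
  (a + b) + (c + d) = d' + c' + b' + a'.
Proof. by move=> -> -> -> ->; ring. Qed.

Lemma eq_big2 (s t : seq (seq bool)) (F G : seq bool -> seq bool -> R) :
  (forall b b', F b b' = G b b') ->
  \sum_(b <- s) \sum_(b' <- t) F b b' = \sum_(b <- s) \sum_(b' <- t) G b b'.
Proof. by move=> e; apply: eq_bigr => b _; apply: eq_bigr => b' _. Qed.

Lemma sum2Z (s t : seq (seq bool)) (F : seq bool -> seq bool -> R) c :
  c * \sum_(b <- s) \sum_(b' <- t) F b b' = \sum_(b <- s) \sum_(b' <- t) (c * F b b').
Proof. by rewrite mulr_sumr; apply: eq_bigr => b _; rewrite mulr_sumr. Qed.

Fixpoint Z (r : R) n g g' : R :=
  match n with
  | 0 => T g * T g'
  | n'.+1 => L g.+1 * L g'.+1 * r * Z r n' 0 0 + L g.+1 * Z r n' 0 g'.+1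
             + L g'.+1 * Z r n' g.+1 0 + Z r n' g.+1 g'.+1
  end.

Fixpoint D n g g' : R :=
  match n with
  | 0 => T g * T g'
  | n'.+1 => L g.+1 * D n' 0 g'.+1 + L g'.+1 * D n' g.+1 0 + D n' g.+1 g'.+1
  end.

Fixpoint B k g g' : R :=
  match k with
  | 0 => L g.+1 * L g'.+1
  | k'.+1 => L g.+1 * B k' 0 g'.+1 + L g'.+1 * B k' g.+1 0 + B k' g.+1 g'.+1
  end.

Lemma Z_sum r n g g' : Z r n g g' =
  \sum_(b <- allbits n) \sum_(b' <- allbits n) (W g b * W g' b' * r ^+ cnt b b').
Proof.
elim: n g g' => [|n IH] g g'; first by rewrite /= !big_seq1 /= expr0 mulr1.
under eq_bigr => b _ do rewrite /= big_cat !big_map /=.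
rewrite /= big_cat !big_map /= !big_split /= !IH !sum2Z.
symmetry; apply: add4; apply: eq_big2 => b b' /=; rewrite ?add0n ?add1n ?exprS; ring.
Qed.

Lemma D_sum n g g' : D n g g' =
  \sum_(b <- allbits n) \sum_(b' <- allbits n) ((cnt b b' == 0)%:R * (W g b * W g' b')).
Proof.
elim: n g g' => [|n IH] g g'; first by rewrite /= !big_seq1 /= mul1r.
under eq_bigr => b _ do rewrite /= big_cat !big_map /=.
rewrite /= big_cat !big_map /= !big_split /= !IH !sum2Z.
symmetry.
have -> : forall (a b c d : R), d = 0 -> (a + b) + (c + d) = c + b + a.
  by move=> a b c d ->; ring.
  by congr (_ + _ + _); apply: eq_big2 => b b' /=; rewrite ?add0n; ring.
by apply: big1 => b _; apply: big1 => b' _; rewrite mul0r.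
Qed.

Lemma Z_decomp r n g g' : Z r n g g' =
  D n g g' + \sum_(k < n) B k g g' * r * Z r (n - k.+1) 0 0.
Proof.
elim: n g g' => [|n IH] g g'; first by rewrite big_ord0 addr0.
rewrite [LHS]/= (IH 0 g'.+1) (IH g.+1 0) (IH g.+1 g'.+1).
rewrite big_ord_recl /= subn1 /=.
have -> : \sum_(i < n) B (bump 0 i) g g' * r * Z r (n.+1 - (bump 0 i).+1) 0 0 =
   L g.+1 * \sum_(k < n) B k 0 g'.+1 * r * Z r (n - k.+1) 0 0
 + L g'.+1 * \sum_(k < n) B k g.+1 0 * r * Z r (n - k.+1) 0 0
 + \sum_(k < n) B k g.+1 g'.+1 * r * Z r (n - k.+1) 0 0.
  rewrite !mulr_sumr -!big_split; apply: eq_bigr => i _.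
  rewrite /bump leq0n add1n subSS /=; ring.
ring.
Qed.

Lemma T0 : T 0 = 1.
Proof. by rewrite /T /tailK big_geq // subr0. Qed.

Lemma TS g : T g = L g.+1 + T g.+1.
Proof. rewrite /T /tailK (big_nat_recr g.+1) //=; ring. Qed.

Lemma Z1 n g g' : Z 1 n g g' = T g * T g'.
Proof.
elim: n g g' => [|n IH] g g' //=.
rewrite !IH T0 (TS g) (TS g'); ring.
Qed.

Lemma total n : D n 0 0 + \sum_(k < n) B k 0 0 = 1.
Proof.
have := Z_decomp 1 n 0 0; rewrite Z1 T0 mulr1 => e; rewrite [RHS]e.
congr (_ + _); apply: eq_bigr => k _; rewrite Z1 T0; ring.
Qed.

Lemma mpw_eq n : meet_prob_win R L n = \sum_(k < n) B k 0 0.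
Proof.
have e : meet_prob_win R L n = Z 1 n 0 0 - D n 0 0.
  rewrite Z_sum D_sum /meet_prob_win.
  transitivity (\sum_(A : {set 'I_n}) \sum_(B : {set 'I_n})
    (fun b b' => (cnt b b' != 0)%:R * (W 0 b * W 0 b')) (bits A) (bits B)).
    apply: eq_bigr => A _; rewrite big_mkcond /=; apply: eq_bigr => B _.
    rewrite -cards_eq0 card_bits !win_bits.
    by case: (cnt _ _ == 0); rewrite ?mul1r ?mul0r.
  rewrite (@sum_sets2 R n (fun b b' => (cnt b b' != 0)%:R * (W 0 b * W 0 b'))) -sumrB; apply: eq_bigr => b _; rewrite -sumrB.
  apply: eq_bigr => b' _; rewrite expr1n mulr1.
  by case: (cnt _ _ == 0); rewrite /= ?mul1r ?mul0r ?subrr ?subr0.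
by rewrite e Z1 T0 mulr1 -(total n) addrC addKr.
Qed.

Lemma expm_eq lam n : exp_moment R L lam n.+1 = expR lam * Z (expR lam) n 0 0.
Proof.
rewrite Z_sum /exp_moment mulr_sumr.
transitivity (\sum_(A : {set 'I_n}) \sum_(B : {set 'I_n})
    (fun b b' => expR lam * (W 0 b * W 0 b' * expR lam ^+ cnt b b')) (bits A) (bits B)).
  apply: eq_bigr => A _; apply: eq_bigr => B _.
  by rewrite !win_bits -card_bits mulrDr mulr1 expRD expRM_natr; ring.
by rewrite (@sum_sets2 R n (fun b b' => expR lam * (W 0 b * W 0 b' * expR lam ^+ cnt b b'))); apply: eq_bigr => b _; rewrite mulr_sumr.
Qed.

Section Pos.
Hypothesis hL : forall j, 0 <= L j.
Hypothesis hT : forall g, 0 <= T g.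

Lemma B_ge0 k g g' : 0 <= B k g g'.
Proof.
elim: k g g' => [|k IH] g g' /=; first exact: mulr_ge0.
by rewrite !addr_ge0 ?mulr_ge0.
Qed.

Lemma D_ge0 n g g' : 0 <= D n g g'.
Proof.
elim: n g g' => [|n IH] g g' /=; first exact: mulr_ge0.
by rewrite !addr_ge0 ?mulr_ge0.
Qed.

Lemma sumB_le1 n : \sum_(k < n) B k 0 0 <= 1.
Proof. rewrite -(total n) lerDr; exact: D_ge0. Qed.

Lemma D_le1 n : D n 0 0 <= 1.
Proof. rewrite -(total n) lerDl; apply: sumr_ge0 => k _; exact: B_ge0. Qed.
End Pos.

End Chain.

Lemma B_ext (R : realType) (L1 L2 : nat -> R) m k g g' :
  (forall j, (j <= m)%N -> L1 j = L2 j) -> (g + k.+1 <= m)%N -> (g' + k.+1 <= m)%N ->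
  B R L1 k g g' = B R L2 k g g'.
Proof.
move=> e; elim: k g g' => [|k IH] g g' hg hg' /=.
  by rewrite !e //; lia.
rewrite !e; try lia.
by rewrite !IH //; lia.
Qed.

Lemma Ktrunc_lt (R : realType) (K : nat -> R) tr j : (j < tr)%N -> Ktrunc R K tr j = K j.
Proof. by rewrite /Ktrunc => ->. Qed.

Lemma Ktrunc_ge0 (R : realType) (K : nat -> R) tr :
  (forall n, 0 <= K n) -> \sum_(1 <= j < tr) K j <= 1 -> forall n, 0 <= Ktrunc R K tr n.
Proof.
move=> hK hs n; rewrite /Ktrunc; case: ltnP => // _; case: eqP => // _.
by rewrite subr_ge0.
Qed.

Lemma Ktrunc_T_ge0 (R : realType) (K : nat -> R) tr : (0 < tr)%N ->
  (forall m, \sum_(1 <= j < m) K j <= 1) -> forall g, 0 <= T R (Ktrunc R K tr) g.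
Proof.
move=> htr hs g; rewrite /T /tailK subr_ge0.
case: (ltnP g tr) => hg.
  rewrite (@eq_big_nat _ _ _ 1 g.+1 _ K); first exact: hs.
  by move=> j /andP [_ hj]; rewrite Ktrunc_lt //; apply: leq_trans hj hg.
rewrite (@big_cat_nat _ _ _ tr) /=; [|lia|lia].
rewrite (@eq_big_nat _ _ _ 1 tr _ K); last by move=> j /andP [_ hj]; rewrite Ktrunc_lt.
rewrite (@big_ltn _ _ _ tr); last lia.
have -> : \sum_(tr.+1 <= j < g.+1) Ktrunc R K tr j = 0.
  apply: big1_seq => j /andP [_]; rewrite mem_index_iota => /andP [h1 _].
  rewrite /Ktrunc; case: ifP; first lia.
  by case: eqP => //; lia.
by rewrite /Ktrunc ltnn eqxx addr0 addrC subrK.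
Qed.

Lemma sum_ord_mono (R : realType) (F : nat -> R) n m : (forall k, 0 <= F k) -> (n <= m)%N ->
  \sum_(k < n) F k <= \sum_(k < m) F k.
Proof.
move=> hF hnm; rewrite -!(big_mkord xpredT) (@big_cat_nat _ _ _ n 0 m) //= lerDl.
by apply: sumr_ge0 => k _.
Qed.

Section Main.
Variable R : realType.
Variable K : nat -> R.
Hypothesis hK : forall n, 0 <= K n.
Hypothesis hS : forall m, \sum_(1 <= j < m) K j <= 1.
Variable p : R.
Hypothesis hp : forall n, meet_prob_win R K n <= p.
Variable tr : nat.
Hypothesis htr : (0 < tr)%N.
Let Lt := Ktrunc R K tr.
Variables (eps rho : R).
Hypotheses (heps : 0 <= eps) (hrho0 : 0 <= rho) (hrho1 : rho <= 1) (hrtr : rho ^+ tr = eps).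

Let hLt : forall j, 0 <= Lt j. Proof. exact: Ktrunc_ge0. Qed.
Let hTt : forall g, 0 <= T R Lt g. Proof. exact: Ktrunc_T_ge0. Qed.
Let hTK : forall g, 0 <= T R K g.
Proof. by move=> g; rewrite /T /tailK subr_ge0. Qed.

Lemma geom_bound n : \sum_(k < n) B R Lt k 0 0 * rho ^+ k.+1 <= p + eps.
Proof.
have pw : forall k, B R Lt k 0 0 * rho ^+ k.+1 <= B R K k 0 0 + eps * B R Lt k 0 0.
  move=> k; have hB := @B_ge0 R Lt hLt k 0 0; have hBK := @B_ge0 R K hK k 0 0.
  case: (ltnP k.+1 tr) => hk.
    rewrite (@B_ext R Lt K tr.-1); last 3 first.
    - by move=> j hj; apply: Ktrunc_lt; lia.
    - lia.
    - lia.
    rewrite -[X in X <= _]addr0; apply: lerD; last exact: mulr_ge0.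
    by rewrite ler_piMr // exprn_ile1.
  rewrite addrC -[X in X <= _]addr0; apply: lerD => //.
  rewrite mulrC ler_wpM2r // -(subnKC hk) exprD hrtr ler_piMr //.
  by rewrite exprn_ile1.
apply: le_trans; first by apply: ler_sum => k _; exact: pw.
rewrite big_split /= -mulr_sumr lerD //.
  by rewrite -mpw_eq.
by rewrite ler_piMr //; apply: (@sumB_le1 R Lt).
Qed.

Variables (r M : R).
Hypotheses (hr : 0 <= r) (hM0 : 0 <= M) (hM : 1 + r * (p + eps) * M <= M).

Lemma Z_bound n : Z R Lt r n 0 0 * rho ^+ n <= M.
Proof.
elim/ltn_ind: n => n IH.
rewrite Z_decomp mulrDl; apply: le_trans hM; apply: lerD.
  have hD := @D_ge0 R Lt hLt hTt n 0 0.
  have h1 := @D_le1 R Lt hLt n.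
  rewrite (le_trans _ h1) //.
  by rewrite ler_piMr // exprn_ile1.
rewrite mulr_suml.
apply: le_trans (_ : \sum_(k < n) (B R Lt k 0 0 * rho ^+ k.+1) * (r * M) <= _).
  apply: ler_sum => k _.
  have hk : (k < n)%N := ltn_ord k.
  have -> : rho ^+ n = rho ^+ k.+1 * rho ^+ (n - k.+1) by rewrite -exprD subnKC.
  have hB := @B_ge0 R Lt hLt k 0 0.
  have hz : Z R Lt r (n - k.+1) 0 0 * rho ^+ (n - k.+1) <= M by apply: IH; lia.
  set m := (n - k.+1)%N in hz *.
  have -> : B R Lt k 0 0 * r * Z R Lt r m 0 0 * (rho ^+ k.+1 * rho ^+ m) =
    (B R Lt k 0 0 * rho ^+ k.+1 * r) * (Z R Lt r m 0 0 * rho ^+ m) by ring.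
  have -> : B R Lt k 0 0 * rho ^+ k.+1 * (r * M) = (B R Lt k 0 0 * rho ^+ k.+1 * r) * M by ring.
  by apply: ler_wpM2l => //; rewrite !mulr_ge0 // exprn_ge0.
rewrite -mulr_suml mulrA (mulrC _ r) ler_wpM2r // ler_wpM2l //.
exact: geom_bound.
Qed.

End Main.

Local Open Scope classical_set_scope.

Theorem lemmaA1 (R : realType) (K : nat -> R) :
  (forall n, 0 <= K n) -> K 0%N = 0 ->
  (fun n : nat => \sum_(0 <= k < n) K k) @ \oo --> (1 : R) ->
  (exists alpha : R, 0 <= alpha /\
     (fun n : nat => ln (K n) / ln (n%:R : R)) @ \oo --> - (1 + alpha)) ->
  meet_prob R K < 1 ->
  forall lam : R, lam < - ln (meet_prob R K) ->
  exists C : R, forall tr : nat, (0 < tr)%N -> tr%:R * f2tr R K tr lam <= C.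
Proof.
move=> hK hK0 hsum _ _ lam hlam.
have hS : forall m, \sum_(1 <= j < m) K j <= 1.
  pose u := fun n : nat => \sum_(0 <= k < n) K k.
  have hu : {homo u : n m / (n <= m)%N >-> n <= m}.
    move=> n m hnm; rewrite /u (@big_cat_nat _ _ _ n 0 m) //= lerDl.
    by apply: sumr_ge0 => k _; exact: hK.
  have cu : cvgn u by apply/cvg_ex; exists 1.
  have lu : limn u = 1 by exact: cvg_lim.
  case=> [|m]; first by rewrite big_geq.
  by have := nondecreasing_cvgn_le hu cu m.+1; rewrite lu /u big_ltn // hK0 add0r.
have hTK : forall g, 0 <= T R K g by move=> g; rewrite /T /tailK subr_ge0.
set p := meet_prob R K.
have hmono : {homo meet_prob_win R K : n m / (n <= m)%N >-> n <= m}.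
  move=> n m hnm; rewrite !mpw_eq; apply: (@sum_ord_mono R (fun k => B R K k 0 0)) => // k; exact: (@B_ge0 R K hK k 0 0).
have hub : has_ubound (range (meet_prob_win R K)).
  by exists 1 => _ [n _ <-]; rewrite mpw_eq; exact: (@sumB_le1 R K hK hTK n).
have cp : cvgn (meet_prob_win R K) := nondecreasing_is_cvgn hmono hub.
have hp : forall n, meet_prob_win R K n <= p := nondecreasing_cvgn_le hmono cp.
have p0 : 0 <= p by have := hp 0%N; rewrite mpw_eq big_ord0.
set r := expR lam.
have r0 : 0 < r := expR_gt0 lam.
have hrp : r * p < 1.
  have [->|pn0] := eqVneq p 0; first by rewrite mulr0.
  have pp : 0 < p by rewrite lt0r pn0.
  have : r < p^-1 by rewrite /r -(lnK pp) -expRN ltr_expR; move: hlam; rewrite /p.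
  by move=> h; rewrite -(mulVf pn0) ltr_pM2r.
set del := 1 - r * p.
have del0 : 0 < del by rewrite subr_gt0.
set eps := Num.min 1 (del / (2 * r)).
have eps0 : 0 < eps by rewrite lt_min ltr01 divr_gt0 // mulr_gt0.
have eps1 : eps <= 1 by rewrite ge_min lexx.
have reps : r * eps <= del / 2.
  have : eps <= del / (2 * r) by rewrite ge_min lexx orbT.
  rewrite -(ler_pM2l r0) => h; apply: le_trans h _.
  have rn0 : r != 0 by rewrite gt_eqF.
  by rewrite le_eqVlt; apply/orP; left; apply/eqP; field.
set M := 2 / del.
have M0 : 0 < M by rewrite divr_gt0.
have hM : 1 + r * (p + eps) * M <= M.
  have dn0 : del != 0 by rewrite gt_eqF.
  have e : del / 2 * M = 1 by rewrite /M; field.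
  have h1 : r * (p + eps) <= 1 - del / 2 by rewrite mulrDr; move: reps; rewrite /del; lra.
  have h2 : r * (p + eps) * M <= (1 - del / 2) * M by rewrite ler_wpM2r // ltW.
  by move: h2; rewrite mulrBl mul1r e; lra.
exists (- ln eps) => tr htr.
set C := - ln eps.
have C0 : 0 <= C by rewrite /C oppr_ge0 ln_le0.
have trp : 0 < tr%:R :> R by rewrite ltr0n.
set c := C / tr%:R.
have c0 : 0 <= c by rewrite divr_ge0 // ltW.
set rho := expR (- c).
have rho0 : 0 < rho := expR_gt0 _.
have rho1 : rho <= 1 by rewrite expR_le1 oppr_le0.
have rhotr : rho ^+ tr = eps.
  rewrite -expRM_natr /c mulNr mulfVK ?gt_eqF // /C opprK lnK //.
have hZ := @Z_bound R K hK hS p hp tr htr eps rho (ltW eps0) (ltW rho0) rho1 rhotr r M (ltW r0) (ltW M0) hM.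
set a := `|ln (r * M)|.
have a0 : 0 <= a := normr_ge0 _.
set u := fun n : nat => ln (exp_moment R (Ktrunc R K tr) lam n) / n%:R.
have key : forall m, u m.+1 <= c + 2 * a * harmonic m.+1.
  move=> m; rewrite /u expm_eq -/r /=.
  set z := Z R (Ktrunc R K tr) r m 0 0.
  have hz : z * rho ^+ m <= M := hZ m.
  have N0 : 0 < (m.+1)%:R :> R by rewrite ltr0n.
  have hh : 0 <= 2 * a * (m.+2)%:R^-1 by rewrite !mulr_ge0 // invr_ge0 ler0n.
  case: (lerP (r * z) 0) => hE.
    by rewrite ln0 // mul0r addr_ge0.
  have rhom : 0 < rho ^+ m := exprn_gt0 _ rho0.
  have hlog : ln (r * z) <= ln (r * M) + m%:R * c.
    have le1 : r * z <= r * M / rho ^+ m.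
      by rewrite -mulrA ler_pM2l // ler_pdivlMr.
    have rM : 0 < r * M by rewrite mulr_gt0.
    rewrite (le_trans (_ : _ <= ln (r * M / rho ^+ m))) //.
      by rewrite ler_ln // posrE // divr_gt0.
    rewrite ln_div ?posrE // lnXn // /rho expRK.
    by rewrite mulNrn opprK mulr_natl.
  have hla : ln (r * M) <= a := ler_norm _.
  have hmc : m%:R * c <= (m.+1)%:R * c by rewrite ler_wpM2r // ler_nat.
  have s1 : ln (r * z) / (m.+1)%:R <= a / (m.+1)%:R + c.
    rewrite ler_pdivrMr // mulrDl divfK ?gt_eqF //.
    by apply: le_trans hlog _; apply: lerD => //; rewrite [c * _]mulrC.
  have s2 : a / (m.+1)%:R <= 2 * a * (m.+2)%:R^-1.
    rewrite ler_pdivrMr // mulrAC ler_pdivlMr ?ltr0n //.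
    rewrite [2 * a]mulrC -mulrA ler_wpM2l // -natrM ler_nat mul2n doubleS !ltnS -addnn leq_addl.
    done.
  by apply: (le_trans s1); rewrite addrC lerD2l.
have hlim : limn u <= c.
  have [cu|ncu] := pselect (cvgn u); last by rewrite dvgP.
  have gl : (fun n => c + 2 * a * harmonic n) @ \oo --> c.
    rewrite -[X in _ --> X]addr0 -[X in _ + X](mulr0 (2 * a)).
    apply: cvgD; first exact: cvg_cst.
    by apply: cvgM; [exact: cvg_cst | exact: cvg_harmonic].
  rewrite -(cvg_lim _ gl); last exact: Rhausdorff.
  apply: ler_lim => //; first by apply/cvg_ex; eexists; exact: gl.
  by exists 1%N => // -[|n] //= _; exact: key.
rewrite /f2tr -/u.
have eC : tr%:R * c = C by rewrite /c mulrC divfK ?gt_eqF.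
by rewrite -eC ler_pM2l.
Qed.
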